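(* Let $H \subset L$ be light-cone regular, $h \in H$ and $h_0 \in H_0$. If $h_0 \le h$ does not hold, then $f_h$ does not depend on the initial variable $f_{h_0}$. Equivalently, if $f_h$ depends on $f_{h_0}$, then $h_0 \le h$.
   Context: Let $R$ be a unique factorization domain with field of fractions $K$. Let $L$ be a finitely generated $\mathbb{Z}$-module, $v_1,\dots,v_N\in L$ distinct elements linearly independent over $\mathbb{Z}_{\ge 0}$ (i.e. $\sum_i a_i v_i=0$ with all $a_i\in\mathbb{Z}_{\ge0}$ forces all $a_i=0$), and $\Phi\in R[Y_1^{\pm1},\dots,Y_N^{\pm1}]$ a Laurent polynomial. Consider the equation $f_h=\Phi(f_{h+v_1},\dots,f_{h+v_N})$ ($h\in L$). Let $S=\{\sum_i a_iv_i : a_i\in\mathbb{Z}_{\ge0}\}$ and define the partial order $h_1\le h_2$ iff $h_1-h_2\in S$. A nonempty subset $H\subset L$ is light-cone regular if for every $h\in H$ the set $\{h'\in H: h'\le h\}$ is finite and $\{h'\in L: h'\ge h\}\subset H$; its initial boundary is $H_0=\{h\in H:\ h+v_i\notin H\text{ for some }i\}$. The $f_{h}$ ($h\in H_0$) are algebraically independent indeterminates over $K$ (initial variables), and for $h\in H\setminus H_0$ the value $f_h$ is defined recursively by the equation as an element of the rational function field $K(f_{h_0}: h_0\in H_0)$. ''$f_h$ does not depend on $f_{h_0}$'' means $f_h$ lies in the subfield generated over $K$ by the initial variables other than $f_{h_0}$. *)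

(* Defs.v *)
From HB Require Import structures.
From mathcomp Require Import all_boot all_order all_algebra.
From mathcomp Require Import fraction mpoly.
Set Implicit Arguments. Unset Strict Implicit. Unset Printing Implicit Defensive.
Import GRing.Theory.
Local Open Scope ring_scope.

Definition dvdr_elt (R : idomainType) (a b : R) : Prop := exists c, b = a * c.

Definition irreducible_elt (R : idomainType) (a : R) : Prop :=
  [/\ a != 0, a \isn't a GRing.unit &
      forall b c : R, a = b * c -> b \is a GRing.unit \/ c \is a GRing.unit].

Definition prime_elt (R : idomainType) (p : R) : Prop :=
  [/\ p != 0, p \isn't a GRing.unit &
      forall a b : R, dvdr_elt p (a * b) -> dvdr_elt p a \/ dvdr_elt p b].

Definition is_ufd (R : idomainType) : Prop :=
  (forall a : R, a != 0 -> a \isn't a GRing.unit ->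
     exists s : seq R, s != [::] /\ (forall p, p \in s -> irreducible_elt p)
                       /\ a = \prod_(p <- s) p)
  /\ (forall p : R, irreducible_elt p -> prime_elt p).

Definition fg_zmod (L : zmodType) : Prop :=
  exists s : seq L, forall x : L, exists c : seq int,
    size c = size s /\ x = \sum_(i < size s) s`_i *~ c`_i.

Section Cone.
Variables (L : zmodType) (N : nat) (v : 'I_N -> L).

Definition nonneg_indep : Prop :=
  forall a : 'I_N -> nat, \sum_i v i *+ a i = 0 -> forall i, a i = 0%N.

Definition inS (d : L) : Prop := exists a : 'I_N -> nat, d = \sum_i v i *+ a i.

Definition cone_le (h1 h2 : L) : Prop := inS (h1 - h2).

Definition light_cone_regular (H : L -> Prop) : Prop :=
  (exists h, H h) /\
  forall h, H h ->
    (exists s : seq L, forall h', H h' -> cone_le h' h -> h' \in s) /\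
    (forall h', cone_le h h' -> H h').

Definition initial_boundary (H : L -> Prop) (h : L) : Prop :=
  H h /\ exists i, ~ H (h + v i).
End Cone.

(* ---------- Laurent polynomials R[Y_1^{+-1},...,Y_N^{+-1}] ----------
   A Laurent polynomial is represented as P * (Y_1 ... Y_N)^{-d} with
   P a polynomial, i.e. R[Y^{+-1}] = R[Y][(Y_1...Y_N)^{-1}]. *)
Definition laurent (R : nzRingType) (N : nat) := ({mpoly R[N]} * nat)%type.

Definition laurent_eval (R : nzRingType) (F : fieldType) (phi : R -> F) (N : nat)
    (P : laurent R N) (y : 'I_N -> F) : F :=
  (map_mpoly phi P.1).@[y] / (\prod_i y i) ^+ P.2.

Section Fields.
Variables (K F : fieldType) (iota : K -> F) (I : eqType).

Definition alg_indep (P : I -> Prop) (x : I -> F) : Prop :=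
  forall n (hs : n.-tuple I), uniq hs -> (forall j, P (tnth hs j)) ->
  forall p : {mpoly K[n]},
    (map_mpoly iota p).@[fun j => x (tnth hs j)] = 0 -> p = 0.

Definition in_gen_field (P : I -> Prop) (x : I -> F) (y : F) : Prop :=
  exists n (hs : n.-tuple I) (p q : {mpoly K[n]}),
    [/\ forall j, P (tnth hs j),
        (map_mpoly iota q).@[fun j => x (tnth hs j)] != 0 &
        y = (map_mpoly iota p).@[fun j => x (tnth hs j)]
            / (map_mpoly iota q).@[fun j => x (tnth hs j)]].
End Fields.

(* Main.v *)
Require Import Defs.
From HB Require Import structures.
From mathcomp Require Import all_boot all_order all_algebra.
From mathcomp Require Import fraction mpoly.
From mathcomp Require Import ring zify.
From Stdlib Require Import Classical.
Set Implicit Arguments. Unset Strict Implicit. Unset Printing Implicit Defensive.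
Local Open Scope ring_scope.
Import GRing.Theory.

Section Gen.
Variables (K F : fieldType) (iota : {rmorphism K -> F}) (I : eqType)
  (P : I -> Prop) (x : I -> F).

Definition E n (p : {mpoly K[n]}) (w : 'I_n -> F) := (map_mpoly iota p).@[w].

Lemma Ecomp n k (p : {mpoly K[n]}) (lq : n.-tuple {mpoly K[k]}) w :
  E (p \mPo lq) w = E p (fun i => E (tnth lq i) w).
Proof.
rewrite /E map_mpoly_comp; last exact: fmorph_inj.
by rewrite comp_mpoly_meval; apply: meval_eq => i; rewrite tnth_map.
Qed.

Lemma EM n (p q : {mpoly K[n]}) w : E (p * q) w = E p w * E q w.
Proof. by rewrite /E rmorphM mevalM. Qed.
Lemma ED n (p q : {mpoly K[n]}) w : E (p + q) w = E p w + E q w.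
Proof. by rewrite /E rmorphD mevalD. Qed.
Lemma E1 n w : E (1 : {mpoly K[n]}) w = 1.
Proof. by rewrite /E rmorph1 meval1. Qed.
Lemma EC n c w : E (c%:MP : {mpoly K[n]}) w = iota c.
Proof. by rewrite /E map_mpolyC mevalC. Qed.
Lemma EX n (i : 'I_n) w : E 'X_i w = w i.
Proof. by rewrite /E map_mpolyX mevalXU. Qed.

Local Notation G := (in_gen_field iota P x).

Lemma G_intro n (hs : n.-tuple I) (p q : {mpoly K[n]}) y :
  (forall j, P (tnth hs j)) -> E q (fun j => x (tnth hs j)) != 0 ->
  y = E p (fun j => x (tnth hs j)) / E q (fun j => x (tnth hs j)) -> G y.
Proof. by move=> a b c; exists n, hs, p, q. Qed.

Lemma G_var i : P i -> G (x i).
Proof.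
move=> Pi; apply: (G_intro (hs := [tuple i]) (p := 'X_0) (q := 1)).
- by move=> j; rewrite (ord1 j) tnth0.
- by rewrite E1 oner_neq0.
- by rewrite E1 divr1 EX tnth0.
Qed.

Lemma G_const c : G (iota c).
Proof.
apply: (G_intro (hs := [tuple]) (p := c%:MP) (q := 1)).
- by move=> [].
- by rewrite /E rmorph1 meval1 oner_neq0.
- by rewrite /E rmorph1 meval1 divr1 map_mpolyC mevalC.
Qed.

Lemma G_combine y1 y2 : G y1 -> G y2 ->
  exists n (hs : n.-tuple I) (p1 q1 p2 q2 : {mpoly K[n]}),
    let w := fun j => x (tnth hs j) in
    [/\ forall j, P (tnth hs j), E q1 w != 0, E q2 w != 0,
        y1 = E p1 w / E q1 w & y2 = E p2 w / E q2 w].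
Proof.
move=> [n1 [hs1 [p1 [q1 [P1 nz1 e1]]]]] [n2 [hs2 [p2 [q2 [P2 nz2 e2]]]]].
pose hs := [tuple of hs1 ++ hs2].
pose lq1 := [tuple ('X_(lshift n2 i) : {mpoly K[n1 + n2]}) | i < n1].
pose lq2 := [tuple ('X_(rshift n1 i) : {mpoly K[n1 + n2]}) | i < n2].
have h1 : forall p, E (p \mPo lq1) (fun j => x (tnth hs j)) = E p (fun j => x (tnth hs1 j)).
  move=> p; rewrite Ecomp; apply: meval_eq => i.
  by rewrite tnth_mktuple EX tnth_lshift.
have h2 : forall p, E (p \mPo lq2) (fun j => x (tnth hs j)) = E p (fun j => x (tnth hs2 j)).
  move=> p; rewrite Ecomp; apply: meval_eq => i.
  by rewrite tnth_mktuple EX tnth_rshift.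
exists (n1 + n2)%N, hs, (p1 \mPo lq1), (q1 \mPo lq1), (p2 \mPo lq2), (q2 \mPo lq2).
rewrite /= !h1 !h2; split; [|exact: nz1|exact: nz2|exact: e1|exact: e2].
move=> j; rewrite -(splitK j); case: (split j) => k /=.
  by rewrite tnth_lshift.
by rewrite tnth_rshift.
Qed.

Lemma addfrac (a b c d : F) : b != 0 -> d != 0 -> a / b + c / d = (a * d + c * b) / (b * d).
Proof. by move=> b0 d0; field; rewrite b0 d0. Qed.
Lemma mulfrac (a b c d : F) : a / b * (c / d) = (a * c) / (b * d).
Proof. by rewrite mulrACA invfM. Qed.

Lemma G_add y1 y2 : G y1 -> G y2 -> G (y1 + y2).
Proof.
move=> g1 g2; have [n [hs [p1 [q1 [p2 [q2 /= [Ps nz1 nz2 e1 e2]]]]]]] := G_combine g1 g2.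
apply: (G_intro (hs := hs) (p := p1 * q2 + p2 * q1) (q := q1 * q2)); first exact: Ps.
  by rewrite EM mulf_neq0.
by rewrite e1 e2 (addfrac _ _ nz1 nz2) !EM ED !EM.
Qed.

Lemma G_mul y1 y2 : G y1 -> G y2 -> G (y1 * y2).
Proof.
move=> g1 g2; have [n [hs [p1 [q1 [p2 [q2 /= [Ps nz1 nz2 e1 e2]]]]]]] := G_combine g1 g2.
apply: (G_intro (hs := hs) (p := p1 * p2) (q := q1 * q2)); first exact: Ps.
  by rewrite EM mulf_neq0.
by rewrite e1 e2 mulfrac !EM.
Qed.

Lemma G_elim y : G y -> exists n (hs : n.-tuple I) (p q : {mpoly K[n]}),
  [/\ forall j, P (tnth hs j), E q (fun j => x (tnth hs j)) != 0 &
   y = E p (fun j => x (tnth hs j)) / E q (fun j => x (tnth hs j))].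
Proof. by move=> g; exact: g. Qed.

Lemma G_inv y : G y -> G y^-1.
Proof.
move=> /G_elim [n [hs [p [q [Ps nz e]]]]].
have [z|nzp] := eqVneq (E p (fun j => x (tnth hs j))) 0.
  by rewrite e z mul0r invr0 -(rmorph0 iota); apply: G_const.
apply: (G_intro (hs := hs) (p := q) (q := p)); [exact: Ps|exact: nzp|].
by rewrite e invf_div.
Qed.

Lemma G_exp y k : G y -> G (y ^+ k).
Proof.
move=> g; elim: k => [|k IH]; first by rewrite expr0 -(rmorph1 iota); apply: G_const.
by rewrite exprS; apply: G_mul.
Qed.

Lemma G_prod k (y : 'I_k -> F) : (forall i, G (y i)) -> G (\prod_i y i).
Proof.
move=> g; apply: (big_ind G) => //.
- by rewrite -(rmorph1 iota); apply: G_const.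
- by move=> a b; apply: G_mul.
Qed.

Lemma G_poly (R' : comNzRingType) k (phi : {rmorphism R' -> F}) (Q : {mpoly R'[k]})
  (y : 'I_k -> F) : (forall c, G (phi c)) -> (forall i, G (y i)) ->
  G ((map_mpoly phi Q).@[y]).
Proof.
move=> gc gy; elim/mpolyind: Q => [|c m Q _ _ IH].
  by rewrite raddf0 meval0 -(rmorph0 iota); apply: G_const.
rewrite rmorphD /= map_mpolyZ map_mpolyX mevalD mevalZ mevalX.
apply: G_add => //; apply: G_mul => //.
by apply: G_prod => i; apply: G_exp.
Qed.

End Gen.

Lemma G_laurent (R : idomainType) (F : fieldType)
  (iota : {rmorphism {fraction R} -> F}) (I : eqType) (P : I -> Prop) (x : I -> F)
  N (Phi : laurent R N) (y : 'I_N -> F) :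
  (forall i, in_gen_field iota P x (y i)) ->
  in_gen_field iota P x (laurent_eval (fun c : R => iota (@FracField.tofrac R c)) Phi y).
Proof.
move=> gy; rewrite /laurent_eval; apply: G_mul.
  apply: (G_poly (phi := (iota \o @FracField.tofrac R))) => // c.
  exact: G_const.
by apply: G_inv; apply: G_exp; apply: G_prod.
Qed.

Section ConeFacts.
Variables (L : zmodType) (N : nat) (v : 'I_N -> L).

Lemma inS0 : inS v 0.
Proof. by exists (fun _ => 0%N); rewrite big1. Qed.

Lemma inSD a b : inS v a -> inS v b -> inS v (a + b).
Proof.
move=> [c ->] [d ->]; exists (fun i => c i + d i)%N.
by rewrite -big_split /=; apply: eq_bigr => i _; rewrite mulrnDr.
Qed.

Lemma inSv i : inS v (v i).
Proof.
exists (fun j => (j == i) : nat); rewrite (bigD1 i) //= eqxx big1 ?addr0 //.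
by move=> j /negbTE ->.
Qed.

Lemma inSNv i : nonneg_indep v -> ~ inS v (- v i).
Proof.
move=> ind [a e].
have := ind (fun j => a j + (j == i))%N.
have -> : \sum_j v j *+ (a j + (j == i))%N = 0.
  under eq_bigr => j _ do rewrite mulrnDr.
  rewrite big_split /= -e.
  rewrite (bigD1 i) //= eqxx big1 ?addr0 ?addNr //.
  by move=> j /negbTE ->.
by move=> /(_ erefl i); rewrite eqxx addn1.
Qed.
End ConeFacts.

Theorem lemma3p3 (R : idomainType) (F : fieldType)
  (iota : {rmorphism {fraction R} -> F})
  (L : zmodType) (N : nat) (v : 'I_N -> L) (Phi : laurent R N)
  (H : L -> Prop) (f : L -> F) (h h0 : L) :
  is_ufd R -> fg_zmod L -> injective v -> nonneg_indep v ->
  light_cone_regular v H ->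
  alg_indep iota (initial_boundary v H) f ->
  (forall y : F, in_gen_field iota (initial_boundary v H) f y) ->
  (forall h', H h' -> ~ initial_boundary v H h' ->
     f h' = laurent_eval (fun c : R => iota (@FracField.tofrac R c)) Phi (fun i => f (h' + v i))) ->
  H h -> initial_boundary v H h0 -> ~ cone_le v h0 h ->
  in_gen_field iota (fun h' => initial_boundary v H h' /\ h' <> h0) f (f h).
Proof.
move=> _ _ _ ind [_ lcr] _ _ rec Hh bh0 nle.
have [[s Hs] _] := lcr h Hh.
have refl : forall a, cone_le v a a by move=> a; rewrite /cone_le subrr; apply: inS0.
suff: forall n h1, H h1 -> ~ cone_le v h0 h1 ->
   (exists s1 : seq L, (size s1 <= n)%N /\ forall h', H h' -> cone_le v h' h1 -> h' \in s1) ->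
   in_gen_field iota (fun h' => initial_boundary v H h' /\ h' <> h0) f (f h1).
  by move=> /(_ (size s) h Hh nle); apply; exists s.
elim=> [|n IH] h1 Hh1 nle1 [s1 [sz Hs1]].
  have := Hs1 h1 Hh1 (refl h1).
  by case: s1 sz Hs1.
case: (classic (initial_boundary v H h1)) => bd.
  apply: G_var; split => // eq; apply: nle1; rewrite eq; exact: refl.
have Hi : forall i, H (h1 + v i).
  move=> i; apply: NNPP => nH; apply: bd; split => //; by exists i.
rewrite (rec h1 Hh1 bd); apply: G_laurent => i.
apply: IH => //.
  move=> c; apply: nle1; rewrite /cone_le.
  have -> : h0 - h1 = (h0 - (h1 + v i)) + v i by rewrite opprD addrA subrK.
  by apply: inSD => //; apply: inSv.
exists (filter (predC1 h1) s1); split.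
  have h1s := Hs1 h1 Hh1 (refl h1).
  rewrite size_filter.
  have := count_predC (predC1 h1) s1.
  have : (0 < count (predC (predC1 h1)) s1)%N.
    rewrite -has_count; apply/hasP; exists h1 => //=; by rewrite negbK.
  move=> pos e; rewrite -ltnS; apply: leq_trans sz; by rewrite -e -addn1 leq_add2l.
move=> h' Hh' c; rewrite mem_filter; apply/andP; split.
  apply/eqP => eq; apply: (@inSNv L N v i ind); rewrite eq in c.
  by move: c; rewrite /cone_le opprD addrA subrr add0r.
apply: Hs1 => //; rewrite /cone_le.
have -> : h' - h1 = (h' - (h1 + v i)) + v i by rewrite opprD addrA subrK.
by apply: inSD => //; apply: inSv.
Qed.
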